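(* Fix $C\in\mathbb C$ and let $f(x)=C/(x-1)^2\in\mathbb C[[x]]$. Let $b(\lambda,x)=\sum_{k\ge-1}b_k(x)\lambda^{-k-1}$, $b_{-1}=1$, $b_k\in\mathbb C[[x]]$, be the unique such series satisfying $b\,b_{xx}-\frac12b_x^2-2(\lambda-2f)b^2=-2\lambda$, and let $$R(\lambda,x)=\begin{pmatrix}\frac12b_x&b\\(\lambda-2f)b-\frac12b_{xx}&-\frac12b_x\end{pmatrix}.$$ Then $b(\lambda,x)$ depends only on $\zeta:=\lambda(x-1)^2$, namely $b=G_{1/2}(\zeta)$, and $$R=\begin{pmatrix}-\frac{C\lambda^{1/2}}{\zeta^{3/2}}G_{3/2}(\zeta)&G_{1/2}(\zeta)\\\frac{\lambda}{\zeta}\Bigl((\zeta-2C)G_{1/2}(\zeta)-\frac{3C}{\zeta}G_{3/2}(\zeta)-\frac{6C(C+1)}{\zeta^2}G_{5/2}(\zeta)\Bigr)&\frac{C\lambda^{1/2}}{\zeta^{3/2}}G_{3/2}(\zeta)\end{pmatrix},$$ where $\zeta^{3/2}:=\lambda^{3/2}(x-1)^3$, $\Delta:=1-8C$, and $$G_\alpha(\zeta):={}_3F_0\Bigl(\alpha,\alpha+\tfrac{\sqrt\Delta}2,\alpha-\tfrac{\sqrt\Delta}2;;\tfrac1\zeta\Bigr)=\sum_{k\ge0}\frac{(\alpha)_k(\alpha+\frac{\sqrt\Delta}2)_k(\alpha-\frac{\sqrt\Delta}2)_k}{k!}\zeta^{-k}.$$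
   Context: $(a)_k=a(a+1)\cdots(a+k-1)$ is the rising Pochhammer symbol; $G_\alpha$ is a formal series in $\zeta^{-1}$ whose coefficients are polynomials in $\Delta$ (hence in $C$). The matrix $R(\lambda,x)$ is the basic matrix resolvent of the KdV solution with initial data $f$, evaluated at $t_{>0}=0$. *)

(* Defs.v *)
(* All objects are formal series over an algebraically closed
   numeric field K (K = C is the case of the paper; the statement is proved for
   every numClosedFieldType, which includes the complex numbers). *)
From mathcomp Require Import all_boot all_order all_algebra.
Set Implicit Arguments. Unset Strict Implicit. Unset Printing Implicit Defensive.
Import Order.TTheory GRing.Theory Num.Theory.
Local Open Scope ring_scope.

Section Defs.
Variable K : numClosedFieldType.

Definition fps := nat -> K.
Definition fconst (c : K) : fps := fun n => if n == 0%N then c else 0.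
Definition fone : fps := fconst 1.
Definition fzero : fps := fun _ => 0.
Definition fadd (a b : fps) : fps := fun n => a n + b n.
Definition fopp (a : fps) : fps := fun n => - a n.
Definition fscale (c : K) (a : fps) : fps := fun n => c * a n.
Definition fmul (a b : fps) : fps :=
  fun n => \sum_(i < n.+1) a i * b (n - i)%N.
Definition fpow (a : fps) (k : nat) : fps := iter k (fmul a) fone.
Definition fderiv (a : fps) : fps := fun n => a n.+1 *+ n.+1.
Definition xm1 : fps := fun n => if n == 0%N then -1 else if n == 1%N then 1 else 0.
(* the series 1/(x-1) = - \sum_n x^n in K[[x]] *)
Definition xm1inv : fps := fun _ => -1.
Definition fdata (C : K) : fps := fscale C (fpow xm1inv 2).

(* ---------- series in lambda^{-1} with coefficients in K[[x]] ----------
   s : ser  represents  \sum_{n>=0} s n * lambda^{-n}. *)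
Definition ser := nat -> fps.
Definition sadd (s t : ser) : ser := fun n => fadd (s n) (t n).
Definition sopp (s : ser) : ser := fun n => fopp (s n).
Definition smul (s t : ser) : ser :=
  fun n k => \sum_(i < n.+1) fmul (s i) (t (n - i)%N) k.
Definition sscale (a : fps) (s : ser) : ser := fun n => fmul a (s n).
Definition sconst (a : fps) : ser := fun n => if n == 0%N then a else fzero.
Definition sshift (s : ser) : ser := fun n => if n is m.+1 then s m else fzero.
Definition sdx (s : ser) : ser := fun n => fderiv (s n).

(* ---------- series  \sum_{n>=0} s n * lambda^{1-n}  (allowing a lambda^1 term) *)
Definition ser1 := nat -> fps.
Definition emb (s : ser) : ser1 := sshift s.
(* multiplication by lambda:  lambda * \sum s n lambda^{-n} = \sum s n lambda^{1-n} *)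
Definition lam (s : ser) : ser1 := s.
Definition s1add (s t : ser1) : ser1 := fun n => fadd (s n) (t n).
Definition s1opp (s : ser1) : ser1 := fun n => fopp (s n).
Definition s1scale (a : fps) (s : ser1) : ser1 := fun n => fmul a (s n).

(* b b_xx - 1/2 b_x^2 - 2 (lambda - 2 f) b^2 = -2 lambda, written as
   [b b_xx - 1/2 b_x^2 + 4 f b^2] - lambda (2 b^2) = lambda (-2)         *)
Definition b_eqn (C : K) (b : ser) : Prop :=
  s1add (emb (sadd (sadd (smul b (sdx (sdx b)))
                         (sopp (sscale (fconst (2^-1)) (smul (sdx b) (sdx b)))))
                   (sscale (fscale 4 (fdata C)) (smul b b))))
        (s1opp (lam (sscale (fconst 2) (smul b b))))
  = lam (sconst (fconst (-2))).

(* b = \sum_{k>=-1} b_k lambda^{-k-1}, i.e. b n = b_{n-1}; b_{-1} = 1 *)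
Definition is_b (C : K) (b : ser) : Prop := b 0%N = fone /\ b_eqn C b.

Definition R11 (b : ser) : ser := sscale (fconst (2^-1)) (sdx b).
Definition R12 (b : ser) : ser := b.
Definition R21 (C : K) (b : ser) : ser1 :=
  s1add (lam b)
        (emb (sopp (sadd (sscale (fscale 2 (fdata C)) b)
                         (sscale (fconst (2^-1)) (sdx (sdx b)))))).
Definition R22 (b : ser) : ser := sopp (R11 b).

Definition poch (a : K) (k : nat) : K := \prod_(i < k) (a + i%:R).
Definition Delta (C : K) : K := 1 - 8 * C.
Definition Gcoef (C alpha : K) (k : nat) : K :=
  poch alpha k * poch (alpha + sqrtC (Delta C) / 2) k
    * poch (alpha - sqrtC (Delta C) / 2) k / (k`!)%:R.
(* multiplication by 1/zeta = lambda^{-1} (x-1)^{-2} *)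
Definition zinv (s : ser) : ser := sshift (sscale (fpow xm1inv 2) s).
(* G_alpha(zeta) = \sum_k Gcoef k zeta^{-k},  zeta^{-k} = lambda^{-k} (x-1)^{-2k} *)
Definition Gser (C alpha : K) : ser :=
  fun n => fscale (Gcoef C alpha n) (fpow xm1inv (2 * n)).
(* multiplication by zeta = lambda (x-1)^2, landing in ser1 *)
Definition zeta_mul (s : ser) : ser1 := lam (sscale (fpow xm1 2) s).
(* multiplication of a ser1 by lambda/zeta = (x-1)^{-2} *)
Definition lam_over_zeta (s : ser1) : ser1 := s1scale (fpow xm1inv 2) s.
(* multiplication by lambda^{1/2}/zeta^{3/2} = lambda^{-1} (x-1)^{-3},
   with zeta^{3/2} := lambda^{3/2} (x-1)^3 *)
Definition lamhalf_over_zeta32 (s : ser) : ser := sshift (sscale (fpow xm1inv 3) s).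

Definition one_half : K := 2^-1.
Definition three_half : K := 3 / 2.
Definition five_half : K := 5 / 2.

End Defs.

(* Main.v *)
Require Import Defs.
From mathcomp Require Import all_boot all_order all_algebra.
From mathcomp Require Import ring zify.
From Stdlib Require Import FunctionalExtensionality.
Set Implicit Arguments. Unset Strict Implicit. Unset Printing Implicit Defensive.
Import GRing.Theory Num.Theory.
Local Open Scope ring_scope.



Section FPS.
Variable K : numClosedFieldType.
Implicit Types a b c : fps K.
Local Notation u := (xm1inv K).
Local Notation P := (fpow (xm1inv K)).

Definition Tr (N : nat) (a : fps K) : {poly K} := \poly_(i < N) a i.

Lemma coef_Tr N a i : (Tr N a)`_i = if (i < N)%N then a i else 0.
Proof. by rewrite coef_poly. Qed.

Lemma coef_Tr_lt N a i : (i < N)%N -> (Tr N a)`_i = a i.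
Proof. by move=> h; rewrite coef_Tr h. Qed.

Lemma fmulE N a b n : (n < N)%N -> fmul a b n = (Tr N a * Tr N b)`_n.
Proof.
move=> nN; rewrite coefM /fmul; apply: eq_bigr => i _.
rewrite !coef_Tr_lt //; [lia|]. have := leq_ord i; lia.
Qed.

Lemma coefM_ext (p q p' q' : {poly K}) n :
  (forall j, (j <= n)%N -> p`_j = p'`_j) ->
  (forall j, (j <= n)%N -> q`_j = q'`_j) -> (p * q)`_n = (p' * q')`_n.
Proof.
move=> Hp Hq; rewrite !coefM; apply: eq_bigr => i _.
rewrite Hp ?Hq //; [lia| exact: leq_ord].
Qed.

Lemma fmulC a b : fmul a b = fmul b a.
Proof.
apply: functional_extensionality => n.
by rewrite (fmulE _ _ (ltnSn n)) (fmulE _ _ (ltnSn n)) mulrC.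
Qed.

Lemma fmulA a b c : fmul (fmul a b) c = fmul a (fmul b c).
Proof.
apply: functional_extensionality => n.
rewrite (fmulE _ _ (ltnSn n)) (fmulE a _ (ltnSn n)).
rewrite (@coefM_ext _ _ (Tr n.+1 a * Tr n.+1 b) (Tr n.+1 c)); last by [].
  rewrite -mulrA; apply: coefM_ext => // j jn.
  by rewrite coef_Tr_lt ?(fmulE _ _ (_ : j < n.+1)%N).
move=> j jn; by rewrite coef_Tr_lt ?(fmulE _ _ (_ : j < n.+1)%N).
Qed.

Lemma fmul1 a : fmul (fone K) a = a.
Proof.
apply: functional_extensionality => n.
rewrite /fmul big_ord_recl /= big1 ?addr0.
  by rewrite /fone /fconst /= mul1r subn0.
by move=> i _; rewrite /fone /fconst /= mul0r.
Qed.

Lemma fmulr1 a : fmul a (fone K) = a.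
Proof. by rewrite fmulC fmul1. Qed.

Lemma fmul0 a : fmul a (fzero K) = fzero K.
Proof.
apply: functional_extensionality => n.
by rewrite /fmul big1 // => i _; rewrite /fzero mulr0.
Qed.

Lemma fmulDr a b c : fmul a (fadd b c) = fadd (fmul a b) (fmul a c).
Proof.
apply: functional_extensionality => n.
by rewrite /fmul /fadd -big_split; apply: eq_bigr => i _; rewrite mulrDr.
Qed.

Lemma fmulZr a b (k : K) : fmul a (fscale k b) = fscale k (fmul a b).
Proof.
apply: functional_extensionality => n.
by rewrite /fmul /fscale mulr_sumr; apply: eq_bigr => i _; rewrite mulrCA.
Qed.

Lemma fmulZl a b (k : K) : fmul (fscale k a) b = fscale k (fmul a b).
Proof. by rewrite fmulC fmulZr fmulC. Qed.

Lemma fscaleA (k l : K) a : fscale k (fscale l a) = fscale (k * l) a.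
Proof. by apply: functional_extensionality => n; rewrite /fscale mulrA. Qed.

Lemma fmulZZ (k l : K) a b : fmul (fscale k a) (fscale l b) = fscale (k * l) (fmul a b).
Proof. by rewrite fmulZl fmulZr fscaleA. Qed.

Lemma fconstE (k : K) : fconst k = fscale k (fone K).
Proof.
apply: functional_extensionality => n.
by rewrite /fscale /fone /fconst; case: (n == 0)%N; rewrite ?mulr1 ?mulr0.
Qed.

Lemma fderivM a b : fderiv (fmul a b) = fadd (fmul (fderiv a) b) (fmul a (fderiv b)).
Proof.
apply: functional_extensionality => n.
rewrite /fderiv /fadd (fmulE _ _ (ltnSn n.+1)) -coef_deriv derivM coefD.
congr (_ + _); rewrite (fmulE _ _ (ltnSn n)); apply: coefM_ext => j jn;
  rewrite ?coef_deriv !coef_Tr_lt //; lia.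
Qed.

Lemma fderivZ (k : K) a : fderiv (fscale k a) = fscale k (fderiv a).
Proof. by apply: functional_extensionality => n; rewrite /fderiv /fscale mulrnAr. Qed.

Lemma fderivD a b : fderiv (fadd a b) = fadd (fderiv a) (fderiv b).
Proof. by apply: functional_extensionality => n; rewrite /fderiv /fadd mulrnDl. Qed.

Lemma fscaleD (k l : K) a : fadd (fscale k a) (fscale l a) = fscale (k + l) a.
Proof. by apply: functional_extensionality => n; rewrite /fadd /fscale mulrDl. Qed.

Lemma fderiv_u : fderiv u = fscale (-1) (fmul u u).
Proof.
apply: functional_extensionality => n.
rewrite /fderiv /fscale /fmul /xm1inv.
under eq_bigr do rewrite mulrNN mulr1.
by rewrite sumr_const card_ord mulN1r mulNrn.
Qed.

Lemma PS m : P m.+1 = fmul u (P m).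
Proof. by []. Qed.

Lemma P_add m n : fmul (P m) (P n) = P (m + n).
Proof.
elim: m => [|m IH]; first by rewrite fmul1.
by rewrite PS fmulA IH addSn.
Qed.

Lemma fderivP m : fderiv (P m) = fscale (- m%:R) (P m.+1).
Proof.
elim: m => [|m IH].
  apply: functional_extensionality => n.
  by rewrite /fderiv /fscale /fpow /= /fone /fconst /= mul0rn oppr0 mul0r.
rewrite PS fderivM IH fderiv_u fmulZl fmulZr fmulA !PS fscaleD.
congr fscale; rewrite -natr1; ring.
Qed.

Lemma xm1_u : fmul (xm1 K) u = fone K.
Proof.
apply: functional_extensionality => n.
rewrite /fmul /xm1inv; case: n => [|n].
  by rewrite big_ord1 /xm1 /fone /fconst /= mulrNN mulr1.
rewrite big_ord_recl big_ord_recl big1 /=.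
  by rewrite /xm1 /fone /fconst /= mulrNN mulr1 mul1r addr0 subrr.
by move=> i _; rewrite /xm1 /= mul0r.
Qed.

Lemma P2_xm1 : fmul (P 2) (fpow (xm1 K) 2) = fone K.
Proof.
rewrite /fpow /= !fmulr1 fmulA -(fmulA u (xm1 K) (xm1 K)) (fmulC u (xm1 K)) xm1_u fmul1.
by rewrite fmulC xm1_u.
Qed.

End FPS.



Section SER.
Variable K : numClosedFieldType.
Local Notation u := (xm1inv K).
Local Notation P := (fpow (xm1inv K)).

Definition Ser (o : nat) (s : nat -> K) : ser K := fun n => fscale (s n) (P (2 * n + o)).
Definition conv (s t : nat -> K) n := \sum_(i < n.+1) s i * t (n - i)%N.
Definition shift (s : nat -> K) n := if n is m.+1 then s m else 0.

Lemma Ser_ext o s t : (forall n, s n = t n) -> Ser o s = Ser o t.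
Proof. by move=> H; apply: functional_extensionality => n; rewrite /Ser H. Qed.

Lemma Ser_scale (k : K) m o s :
  sscale (fscale k (P m)) (Ser o s) = Ser (m + o) (fun n => k * s n).
Proof.
apply: functional_extensionality => n.
by rewrite /sscale /Ser fmulZZ P_add addnCA.
Qed.

Lemma Ser_scaleP m o s : sscale (P m) (Ser o s) = Ser (m + o) s.
Proof.
apply: functional_extensionality => n.
by rewrite /sscale /Ser fmulZr P_add addnCA.
Qed.

Lemma Ser_const (k : K) o s : sscale (fconst k) (Ser o s) = Ser o (fun n => k * s n).
Proof. by rewrite fconstE (_ : fone K = P 0) // Ser_scale. Qed.

Lemma Ser_dx o s : sdx (Ser o s) = Ser o.+1 (fun n => s n * - (2 * n + o)%:R).
Proof.
apply: functional_extensionality => n.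
by rewrite /sdx /Ser fderivZ fderivP fscaleA addnS.
Qed.

Lemma Ser_mul o o' s t : smul (Ser o s) (Ser o' t) = Ser (o + o') (conv s t).
Proof.
apply: functional_extensionality => n; apply: functional_extensionality => k.
rewrite /smul /Ser /fscale /conv mulr_suml; apply: eq_bigr => i _.
rewrite fmulZZ P_add /fscale (_ : (2 * i + o + (2 * (n - i) + o') = 2 * n + (o + o'))%N) //; have := leq_ord i; lia.
Qed.

Lemma Ser_shift o s : sshift (Ser o.+2 s) = Ser o (shift s).
Proof.
apply: functional_extensionality => n; case: n => [|n] /=.
  by apply: functional_extensionality => k; rewrite /Ser /fscale /fzero /= mul0r.
rewrite /Ser; do 2 f_equal; lia.
Qed.

Lemma Ser_add o s t : sadd (Ser o s) (Ser o t) = Ser o (fun n => s n + t n).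
Proof.
apply: functional_extensionality => n; apply: functional_extensionality => k.
by rewrite /sadd /Ser /fadd /fscale mulrDl.
Qed.

Lemma Ser_opp o s : sopp (Ser o s) = Ser o (fun n => - s n).
Proof.
apply: functional_extensionality => n; apply: functional_extensionality => k.
by rewrite /sopp /Ser /fopp /fscale mulNr.
Qed.

Lemma Ser_zinv o s : zinv (Ser o s) = Ser o (shift s).
Proof. by rewrite /zinv Ser_scaleP add2n Ser_shift. Qed.

Lemma Ser_lh o s : lamhalf_over_zeta32 (Ser o s) = Ser o.+1 (shift s).
Proof. by rewrite /lamhalf_over_zeta32 Ser_scaleP (_ : 3 + o = o.+1.+2)%N // Ser_shift. Qed.

Lemma Ser_zeta s : sscale (P 2) (zeta_mul (Ser 0 s)) = Ser 0 s.
Proof.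
apply: functional_extensionality => n.
by rewrite /sscale /zeta_mul /lam /sscale -fmulA P2_xm1 fmul1.
Qed.

Lemma sscale_add (a : fps K) (s t : ser K) : sscale a (sadd s t) = sadd (sscale a s) (sscale a t).
Proof. by apply: functional_extensionality => n; rewrite /sscale /sadd fmulDr. Qed.

Lemma sscale_shift (a : fps K) (s : ser K) : sscale a (sshift s) = sshift (sscale a s).
Proof.
apply: functional_extensionality => n; case: n => [|n] //=.
by rewrite /sscale fmul0.
Qed.

Lemma Gser_Ser C al : Gser C al = Ser 0 (Gcoef C al).
Proof. by apply: functional_extensionality => n; rewrite /Gser /Ser addn0. Qed.

End SER.



Section GC.
Variable K : numClosedFieldType.
Variable C : K.

Lemma poch_S (a : K) k : poch a k.+1 = poch a k * (a + k%:R).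
Proof. by rewrite /poch big_ord_recr. Qed.

Lemma poch_Sl (a : K) k : poch a k.+1 = a * poch (a + 1) k.
Proof.
rewrite /poch big_ord_recl /= addr0; congr (_ * _); apply: eq_bigr => i _.
rewrite /bump /= add1n -natr1; ring.
Qed.

Lemma natS_neq0 k : (k.+1%:R : K) != 0.
Proof. by rewrite pnatr_eq0. Qed.

Lemma fact_neq0 k : (k`!%:R : K) != 0.
Proof. by rewrite pnatr_eq0 -lt0n fact_gt0. Qed.

Local Notation sD := (sqrtC (Delta C) / 2).

Lemma sD2 : sD ^+ 2 = Delta C / 4.
Proof. rewrite expr_div_n sqrtCK; congr (_ / _); ring. Qed.

Lemma Gcoef_rec al k :
  (k.+1)%:R * Gcoef C al k.+1 = (al + k%:R) * ((al + k%:R)^+2 - Delta C / 4) * Gcoef C al k.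
Proof.
rewrite /Gcoef !poch_S factS natrM -sD2.
have h1 := natS_neq0 k; have h2 := fact_neq0 k.
field; by rewrite h2 nat1r h1.
Qed.

Lemma Gcoef_up al k :
  (k.+1)%:R * Gcoef C al k.+1 = al * (al^+2 - Delta C / 4) * Gcoef C (al + 1) k.
Proof.
rewrite /Gcoef !poch_Sl factS natrM -sD2.
have h1 := natS_neq0 k; have h2 := fact_neq0 k.
rewrite (_ : al + sD + 1 = al + 1 + sD); last ring.
rewrite (_ : al - sD + 1 = al + 1 - sD); last ring.
field; by rewrite h2 nat1r h1.
Qed.

Local Notation g := (Gcoef C (one_half K)).
Local Notation h3 := (Gcoef C (three_half K)).
Local Notation h5 := (Gcoef C (five_half K)).

Lemma g0 : g 0 = 1.
Proof. by rewrite /Gcoef /poch !big_ord0 /= !mul1r invr1. Qed.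

Lemma g_rec k : 2 * (k.+1)%:R * g k.+1 = (2 * k%:R + 1) * (k%:R ^+ 2 + k%:R + 2 * C) * g k.
Proof.
rewrite -mulrA Gcoef_rec /Delta /one_half.
have h2 : (2 : K) != 0 by rewrite pnatr_eq0.
by field.
Qed.

Lemma g_h3 k : (k.+1)%:R * g k.+1 = C * h3 k.
Proof.
rewrite Gcoef_up /Delta /one_half /three_half.
have h2 : (2 : K) != 0 by rewrite pnatr_eq0.
rewrite (_ : 2^-1 + 1 = 3 / 2 :> K); last by field.
by congr (_ * _); field.
Qed.

Lemma h3_h5 k : (k.+1)%:R * h3 k.+1 = 3 * (1 + C) * h5 k.
Proof.
rewrite Gcoef_up /Delta /five_half /three_half.
have h2 : (2 : K) != 0 by rewrite pnatr_eq0.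
rewrite (_ : 3 / 2 + 1 = 5 / 2 :> K); last by field.
by congr (_ * _); field.
Qed.

End GC.



Section E.
Variable K : numClosedFieldType.
Variable C : K.
Local Notation g := (Gcoef C (one_half K)).

Definition th (q : {poly K}) := 'X * q^`().

Lemma coef_th q k : (th q)`_k = q`_k * k%:R.
Proof.
rewrite /th coefXM; case: k => [|k] /=; first by rewrite mulr0.
by rewrite coef_deriv mulr_natr.
Qed.

Lemma cMn (q : {poly K}) n i : (q *+ n)`_i = q`_i *+ n. Proof. exact: coefMn. Qed.
Lemma cD (q r : {poly K}) i : (q + r)`_i = q`_i + r`_i. Proof. exact: coefD. Qed.
Lemma cB (q r : {poly K}) i : (q - r)`_i = q`_i - r`_i. Proof. exact: coefB. Qed.
Lemma cCM (c : K) (q : {poly K}) i : (c%:P * q)`_i = c * q`_i. Proof. exact: coefCM. Qed.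
Lemma cXM (q : {poly K}) i : ('X * q)`_i = if i == 0%N then 0 else q`_i.-1. Proof. exact: coefXM. Qed.

Variable m : nat.
Definition pp : {poly K} := \poly_(i < m.+2) g i.
Lemma pE j : (j <= m.+1)%N -> pp`_j = g j.
Proof. by move=> h; rewrite coef_poly ltnS h. Qed.

Definition AA := pp * (th (th pp) *+ 4 + th pp *+ 2) - (th pp * th pp) *+ 2
   + C%:P * (pp * pp) *+ 4.
Definition EE := 'X * AA - (pp * pp) *+ 2.
Definition MM := 'X * (th (th (th pp)) *+ 4 + th (th pp) *+ 6 + th pp *+ 2
   + C%:P * th pp *+ 8 + C%:P * pp *+ 4) - th pp *+ 4.

Lemma thEE : th EE = pp * MM.
Proof. rewrite /EE /MM /AA /th !derivE; ring. Qed.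

Lemma MM0 j : (j <= m.+1)%N -> MM`_j = 0.
Proof.
rewrite /MM cB cXM; case: j => [|k] /= hk.
  by rewrite !cD coef_th mulr0; ring.
rewrite !cD !cCM !coef_th !pE; try lia.
have H := g_rec C k.
have Hk : (2 * k.+1%:R : K) != 0 by rewrite mulf_neq0 ?natS_neq0 // pnatr_eq0.
have -> : g k.+1 = (2 * k%:R + 1) * (k%:R ^+ 2 + k%:R + 2 * C) * g k / (2 * k.+1%:R).
  by apply: (mulfI Hk); rewrite H [RHS]mulrC divfK.
rewrite -natr1; field; by rewrite nat1r natS_neq0.
Qed.

Lemma cast2 n : ((2 * n + 0)%:R : K) = 2 * n%:R. Proof. by rewrite addn0 natrM. Qed.
Lemma cast2' n : ((2 * n + 1)%:R : K) = 2 * n%:R + 1. Proof. by rewrite natrD natrM. Qed.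
Lemma cM (q r : {poly K}) i : (q * r)`_i = \sum_(j < i.+1) q`_j * r`_(i - j). Proof. exact: coefM. Qed.

Lemma EE0 : EE`_m.+1 = 0.
Proof.
have h : (th EE)`_m.+1 = (pp * MM)`_m.+1 by rewrite thEE.
move: h.
rewrite coef_th cM big1.
  move/eqP; rewrite mulf_eq0 (negbTE (natS_neq0 K m)) orbF => /eqP //.
move=> i _; rewrite MM0 ?mulr0 //; lia.
Qed.

Lemma main_scalar :
  conv g (fun n => g n * - (2 * n + 0)%:R * - (2 * n + 1)%:R) m
  - 2^-1 * conv (fun n => g n * - (2 * n + 0)%:R) (fun n => g n * - (2 * n + 0)%:R) m
  + 4 * C * conv g g m - 2 * conv g g m.+1 = 0.
Proof.
have HE := EE0.
rewrite /EE /AA (cB ('X * _) ((pp*pp) *+ 2)) (cXM _ m.+1) /= (cMn (pp*pp) 2 m.+1) in HE.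
rewrite (cD (_ - _) (C%:P * (pp * pp) *+ 4)) (cB (pp * _) ((th pp * th pp) *+ 2)) in HE.
rewrite (cMn (th pp * th pp) 2 m) (cMn (C%:P * (pp * pp)) 4 m) in HE.
have e1 : (pp * (th (th pp) *+ 4 + th pp *+ 2))`_m
   = conv g (fun n => g n * - (2 * n + 0)%:R * - (2 * n + 1)%:R) m.
  rewrite cM /conv; apply: eq_bigr => i _.
  rewrite !cD !coef_th !pE; try (have := leq_ord i; lia).
  rewrite !cast2 !cast2'; move: (g i) (g (m - i)) ((m - i)%:R) => a b c; ring.
have e2 : (th pp * th pp)`_m *+ 2
   = 2^-1 * conv (fun n => g n * - (2 * n + 0)%:R) (fun n => g n * - (2 * n + 0)%:R) m.
  rewrite cM /conv -sumrMnl !mulr_sumr; apply: eq_bigr => i _.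
  rewrite !coef_th !pE; try (have := leq_ord i; lia).
  have h2 : (2 : K) != 0 by rewrite pnatr_eq0.
  rewrite !cast2; move: (g i) (g (m - i)) ((m - i)%:R) (i%:R) h2 => a b c d h2; by field.
have e3 : (C%:P * (pp * pp))`_m *+ 4 = 4 * C * conv g g m.
  rewrite cCM cM mulr_sumr /conv -sumrMnl !mulr_sumr; apply: eq_bigr => i _.
  rewrite !pE; try (have := leq_ord i; lia).
  move: (g i) (g (_ - i)) => a b; ring.
have e4 : (pp * pp)`_m.+1 *+ 2 = 2 * conv g g m.+1.
  rewrite cM /conv -sumrMnl !mulr_sumr; apply: eq_bigr => i _.
  rewrite !pE; try (have := leq_ord i; lia).
  move: (g i) (g (_ - i)) => a b; ring.
by rewrite e1 e2 e3 e4 in HE.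
Qed.

End E.



Section D.
Variable K : numClosedFieldType.
Variable C : K.
Local Notation g := (Gcoef C (one_half K)).

Lemma s1E : (@s1add K = @sadd K) * (@s1opp K = @sopp K) * (@emb K = @sshift K)
   * (@s1scale K = @sscale K).
Proof. by []. Qed.

Lemma Ser0_const (k : K) : sconst (fconst k) = Ser 0 (fun n => if n == 0%N then k else 0).
Proof.
apply: functional_extensionality => n; rewrite /sconst /Ser.
case: n => [|n] /=; first by rewrite fconstE.
by apply: functional_extensionality => j; rewrite /fscale /fzero mul0r.
Qed.

Lemma G_b_eqn : b_eqn C (Gser C (one_half K)).
Proof.
rewrite /b_eqn !s1E Gser_Ser /lam /fdata fscaleA.
rewrite !Ser_dx !Ser_mul [sscale (fconst 2^-1) _]Ser_const [sscale (fconst 2) _]Ser_const.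
rewrite Ser_scale !Ser_opp !add0n !addn0 !Ser_add Ser_shift Ser_add.
rewrite Ser0_const; apply: Ser_ext => n.
case: n => [|m] /=.
  by rewrite /conv big_ord1 g0 mulr1; ring.
exact: main_scalar.
Qed.

Lemma G_is_b : is_b C (Gser C (one_half K)).
Proof.
split; last exact: G_b_eqn.
apply: functional_extensionality => n.
by rewrite /Gser /fscale g0 mul1r.
Qed.

Lemma fconstE' (k : K) : fconst k = fscale k (fone K). Proof. exact: fconstE. Qed.

Definition XX (b : ser K) := sadd (sadd (smul b (sdx (sdx b)))
   (sopp (sscale (fconst (2^-1)) (smul (sdx b) (sdx b)))))
   (sscale (fscale 4 (fdata C)) (smul b b)).

Lemma eqn_at b m k : b_eqn C b -> XX b m k - 2 * smul b b m.+1 k = 0.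
Proof.
move=> H; have := congr1 (fun s : ser1 K => s m.+1 k) H.
rewrite /s1add /fadd /emb /s1opp /fopp /lam /=.
rewrite [sscale (fconst 2) _ _]/sscale (fconstE 2) fmulZl fmul1 /fscale /sconst /= /fzero.
by move=> h; exact: h.
Qed.

Lemma smul_split (b : ser K) n k : b 0%N = fone K ->
  smul b b n.+1 k = 2 * b n.+1 k + \sum_(i < n) fmul (b i.+1) (b (n - i)%N) k.
Proof.
move=> b0; rewrite /smul big_ord_recl big_ord_recr /= subn0 subnn b0 fmul1 fmulr1.
rewrite /bump /= !add1n.
under eq_bigr do rewrite subSS.
ring.
Qed.

Lemma smul_loc (s s' t t' : ser K) m : (forall i, (i <= m)%N -> s i = s' i) ->
  (forall i, (i <= m)%N -> t i = t' i) -> smul s t m = smul s' t' m.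
Proof.
move=> Hs Ht; apply: functional_extensionality => k; rewrite /smul.
apply: eq_bigr => i _; rewrite Hs ?Ht //; [lia | exact: leq_ord].
Qed.

Lemma XX_loc (b b' : ser K) m : (forall i, (i <= m)%N -> b i = b' i) -> XX b m = XX b' m.
Proof.
move=> H; rewrite /XX /sadd /sopp /sscale.
rewrite (@smul_loc b b' (sdx (sdx b)) (sdx (sdx b'))) ?(@smul_loc (sdx b) (sdx b') (sdx b) (sdx b'))
  ?(@smul_loc b b' b b') // => i hi; by rewrite /sdx H.
Qed.

Lemma uniq_b (b b' : ser K) : is_b C b -> is_b C b' -> b = b'.
Proof.
case=> b0 Hb [b0' Hb'].
have H : forall n i, (i <= n)%N -> b i = b' i.
  elim=> [|n IH] i hi.
    by move: hi; rewrite leqn0 => /eqP ->; rewrite b0 b0'.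
  case: (ltnP i n.+1) => [hlt|hge]; first by apply: IH; lia.
  have -> : i = n.+1 by lia.
  apply: functional_extensionality => k.
  have e1 := @eqn_at b n k Hb; have e2 := @eqn_at b' n k Hb'.
  rewrite (XX_loc (b':=b')) in e1; last exact: IH.
  rewrite !smul_split // in e1 e2.
  have eS : \sum_(i < n) fmul (b i.+1) (b (n - i)%N) k = \sum_(i < n) fmul (b' i.+1) (b' (n - i)%N) k.
    apply: eq_bigr => j _; rewrite !IH //; have := ltn_ord j; lia.
  rewrite eS in e1.
  move: e1 e2; set S := \sum_(i < n) _; set X := XX b' n k => e1 e2.
  have h4 : (4 : K) != 0 by rewrite pnatr_eq0.
  apply: (mulfI h4); apply/eqP; rewrite -subr_eq0; apply/eqP.
  have -> : 4 * b n.+1 k - 4 * b' n.+1 k = (X - 2 * (2 * b' n.+1 k + S)) - (X - 2 * (2 * b n.+1 k + S)) by ring.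
  by rewrite e1 e2 subrr.
apply: functional_extensionality => n; exact: H.
Qed.

End D.



Section G.
Variable K : numClosedFieldType.
Variable C : K.
Local Notation g := (Gcoef C (one_half K)).
Local Notation h3 := (Gcoef C (three_half K)).
Local Notation h5 := (Gcoef C (five_half K)).

Lemma R11_scalar n :
  2^-1 * (g n * - (2 * n + 0)%:R) = - (C * shift h3 n).
Proof.
case: n => [|k] /=; first ring.
rewrite cast2 -(g_h3 C k).
have h2 : (2 : K) != 0 by rewrite pnatr_eq0.
move: (g k.+1) (k.+1%:R) h2 => a c h2; by field.
Qed.

Lemma R21_scalar n :
  g n + shift (fun n0 => - (2 * C * g n0 + 2^-1 * (g n0 * - (2 * n0 + 0)%:R * - (2 * n0 + 1)%:R))) n
  = g n + shift (fun n0 => - (2 * C * g n0)) n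
    + shift (fun n0 => - (3 * C * shift h3 n0 + 6 * C * (C + 1) * shift (shift h5) n0)) n.
Proof.
case: n => [|m] /=; first by rewrite !addr0.
case: m => [|m] /=.
  rewrite mulr0 mulr0 !addr0 oppr0 addr0; ring.
rewrite cast2 cast2'.
case: m => [|j] /=.
  have H := g_h3 C 0.
  rewrite mulr0 addr0 (_ : 3 * C * h3 0 = 3 * (C * h3 0)); last ring.
  by rewrite -H mul1r; field.
have H1 := g_h3 C j.+1.
have H2 := h3_h5 C j.
rewrite (_ : 6 * C * (C + 1) * h5 j = 2 * C * (3 * (1 + C) * h5 j)); last ring.
rewrite -H2.
have ej1 : (j.+1%:R : K) = j%:R + 1 by rewrite natr1.
have ej2 : (j.+2%:R : K) = j%:R + 2 by rewrite -addn2 natrD.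
have nz : (j%:R + 2 : K) != 0 by rewrite -ej2 natS_neq0.
have Hg : g j.+2 = C * h3 j.+1 / (j%:R + 2).
  by rewrite -H1 ej2 [_ * g _]mulrC mulfK.
rewrite Hg ej1 ej2.
have h2 : (2 : K) != 0 by rewrite pnatr_eq0.
move: (h3 j.+1) (j%:R) nz h2 => a c nz h2.
field; by rewrite nz.
Qed.

End G.

Unset Implicit Arguments.
Set Strict Implicit.

Theorem theorem1p9 (K : numClosedFieldType) (C : K) :
  (exists b : ser K, is_b C b) /\
  (forall b : ser K, is_b C b ->
     [/\ b = Gser C (one_half K),
         R11 b = sopp (sscale (fconst C) (lamhalf_over_zeta32 (Gser C (three_half K)))),
         R12 b = Gser C (one_half K),
         R21 C b =
           lam_over_zeta
             (s1add (s1add (zeta_mul (Gser C (one_half K)))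
                           (emb (sopp (sscale (fconst (2 * C)) (Gser C (one_half K))))))
                    (emb (sopp (sadd (sscale (fconst (3 * C)) (zinv (Gser C (three_half K))))
                                     (sscale (fconst (6 * C * (C + 1)))
                                             (zinv (zinv (Gser C (five_half K)))))))))
       & R22 b = sscale (fconst C) (lamhalf_over_zeta32 (Gser C (three_half K)))]).
Proof.
split; first by exists (Gser C (one_half K)); exact: G_is_b.
move=> b Hb; have -> := uniq_b Hb (G_is_b C).
split => //.
- rewrite /R11 !Gser_Ser Ser_dx Ser_const Ser_lh Ser_const Ser_opp; apply: Ser_ext => n.
  exact: R11_scalar.
- rewrite /R21 /lam_over_zeta !s1E !Gser_Ser /lam /fdata fscaleA.
  rewrite !Ser_zinv !Ser_dx !Ser_const !Ser_opp Ser_add !sscale_add Ser_zeta !sscale_shift.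
  rewrite !Ser_scaleP Ser_scale ?add0n ?addn0 !Ser_opp !Ser_add !Ser_shift !Ser_add.
  rewrite !Ser_opp !Ser_scaleP ?addn0 !Ser_shift !Ser_add.
  apply: Ser_ext => n; exact: R21_scalar.
- rewrite /R22 /R11 !Gser_Ser Ser_dx Ser_const Ser_lh Ser_const Ser_opp; apply: Ser_ext => n.
  by rewrite R11_scalar opprK.
Qed.
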